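(* Let $\delta\in(0,1)$ and let $(G,\beta,\gamma,\lambda)$ be an anti-ferromagnetic two-spin system whose graph $G$ has maximum degree $\Delta$. Let $\chi=+1$ if $\lambda\le(\gamma/\beta)^{\Delta/2}$ and $\chi=-1$ otherwise. Then: (1) For every $1\le d<\Delta$: if $(\beta,\gamma,\lambda)$ is $d$-unique with gap $\delta$, then $(\beta,\gamma,(1+\frac\delta2)^\chi\lambda)$ is $d$-unique with gap $\frac\delta2$. (2) Suppose moreover that $(\beta,\gamma,\lambda)$ is $(\Delta-1)$-unique with gap $\delta$ and $\Delta-1>(1-\frac\delta2)\overline\Delta$, where $\overline\Delta=\frac{1+\sqrt{\beta\gamma}}{1-\sqrt{\beta\gamma}}$. Then $\lambda\le(\gamma/\beta)^{\Delta/2}$ implies $(1+\frac\delta2)^\chi\lambda<(\gamma/\beta)^{\Delta/2}$, and $\lambda>(\gamma/\beta)^{\Delta/2}$ implies $(1+\frac\delta2)^\chi\lambda>(\gamma/\beta)^{\Delta/2}$.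
   Context: Anti-ferromagnetic two-spin parameters: $0\le\beta\le\gamma$, $\gamma>0$, $\lambda>0$, $\beta\gamma<1$. For an integer $d\ge1$, $(\beta,\gamma,\lambda)$ is $d$-unique with gap $\delta$ if $\frac{d(1-\beta\gamma)\hat x_d}{(\beta\hat x_d+1)(\hat x_d+\gamma)}\le1-\delta$, where $\hat x_d>0$ is the unique fixed point of $F_d(x)=\lambda\left(\frac{\beta x+1}{x+\gamma}\right)^d$. Convention: $(\gamma/\beta)^{\Delta/2}=+\infty$ when $\beta=0$. *)

(* Defs.v *)
From HB Require Import structures.
From mathcomp Require Import all_boot all_order all_algebra.
Set Implicit Arguments. Unset Strict Implicit. Unset Printing Implicit Defensive.
Import Order.TTheory GRing.Theory Num.Theory.
Local Open Scope ring_scope.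

Definition antiferro {R : rcfType} (beta gamma lambda : R) : Prop :=
  0 <= beta /\ beta <= gamma /\ 0 < gamma /\ 0 < lambda /\ beta * gamma < 1.

Definition Fd {R : rcfType} (d : nat) (beta gamma lambda x : R) : R :=
  lambda * ((beta * x + 1) / (x + gamma)) ^+ d.

Definition d_unique {R : rcfType} (d : nat) (beta gamma lambda delta : R) : Prop :=
  exists xh : R, 0 < xh /\ Fd d beta gamma lambda xh = xh /\
    (forall y : R, 0 < y -> Fd d beta gamma lambda y = y -> y = xh) /\
    d%:R * (1 - beta * gamma) * xh / ((beta * xh + 1) * (xh + gamma)) <= 1 - delta.

(* lambda <= (gamma/beta)^(Delta/2), with the convention that the right-hand
   side is +oo when beta = 0; (gamma/beta)^(Delta/2) = sqrt(gamma/beta)^Delta. *)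
Definition le_thr {R : rcfType} (beta gamma : R) (Delta : nat) (x : R) : Prop :=
  beta = 0 \/ x <= Num.sqrt (gamma / beta) ^+ Delta.
Definition lt_thr {R : rcfType} (beta gamma : R) (Delta : nat) (x : R) : Prop :=
  beta = 0 \/ x < Num.sqrt (gamma / beta) ^+ Delta.
Definition gt_thr {R : rcfType} (beta gamma : R) (Delta : nat) (x : R) : Prop :=
  beta <> 0 /\ Num.sqrt (gamma / beta) ^+ Delta < x.

Definition shifted {R : rcfType} (beta gamma : R) (Delta : nat) (lambda delta : R) : R :=
  if (beta == 0) || (lambda <= Num.sqrt (gamma / beta) ^+ Delta)
  then (1 + delta / 2) * lambda
  else (1 + delta / 2)^-1 * lambda.

Definition Delta_bar {R : rcfType} (beta gamma : R) : R :=
  (1 + Num.sqrt (beta * gamma)) / (1 - Num.sqrt (beta * gamma)).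

Definition simple_graph {V : finType} (E : rel V) : Prop :=
  symmetric E /\ irreflexive E.
Definition max_degree {V : finType} (E : rel V) : nat :=
  \max_(v : V) #|[set u | E v u]|.

(* Main.v *)
Require Import Defs.
From HB Require Import structures.
From mathcomp Require Import all_boot all_order all_algebra.
From mathcomp Require Import ring lra.
Import Order.TTheory GRing.Theory Num.Theory.
Local Open Scope ring_scope.

Definition hh {R : rcfType} (beta gamma x : R) := (beta * x + 1) / (x + gamma).

Lemma hh_pos (R : rcfType) (beta gamma x : R) :
  0 <= beta -> 0 < gamma -> 0 < x -> 0 < hh beta gamma x.
Proof.
move=> hb hg hx; have h1 : 0 < beta * x + 1 by have := mulr_ge0 hb (ltW hx); lra.
have h2 : 0 < x + gamma by lra.
exact: divr_gt0.
Qed.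

Lemma hh_anti (R : rcfType) (beta gamma a b : R) :
  0 <= beta -> 0 < gamma -> beta * gamma < 1 ->
  0 < a -> a <= b -> hh beta gamma b <= hh beta gamma a.
Proof.
move=> hb hg hbg ha hab; rewrite /hh ler_pdivrMr; last by lra.
rewrite mulrAC ler_pdivlMr; last by lra.
have : 0 <= (b - a) * (1 - beta * gamma) by apply: mulr_ge0; lra.
nra.
Qed.

Lemma hhX_anti (R : rcfType) d (beta gamma a b : R) :
  0 <= beta -> 0 < gamma -> beta * gamma < 1 ->
  0 < a -> a <= b -> hh beta gamma b ^+ d <= hh beta gamma a ^+ d.
Proof.
move=> hb hg hbg ha hab; apply: lerXn2r; rewrite ?nnegrE.
- by apply: ltW; apply: hh_pos => //; lra.
- by apply: ltW; apply: hh_pos.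
exact: hh_anti.
Qed.

Lemma fix_uniq (R : rcfType) d (beta gamma lam y1 y2 : R) :
  0 <= beta -> 0 < gamma -> beta * gamma < 1 -> 0 < lam -> 0 < y1 -> 0 < y2 ->
  lam * hh beta gamma y1 ^+ d = y1 -> lam * hh beta gamma y2 ^+ d = y2 -> y1 = y2.
Proof.
move=> hb hg hbg hl h1 h2 e1 e2.
wlog le12 : y1 y2 h1 h2 e1 e2 / y1 <= y2.
  move=> W; case: (lerP y1 y2) => c; first exact: W.
  by symmetry; apply: W => //; apply: ltW.
have H := @hhX_anti R d _ _ _ _ hb hg hbg h1 le12.
have : lam * hh beta gamma y2 ^+ d <= lam * hh beta gamma y1 ^+ d by rewrite ler_pM2l.
rewrite e1 e2.
lra.
Qed.

Lemma Pev (R : rcfType) d (beta gamma L t : R) :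
  0 < gamma -> 0 < t ->
  ('X * ('X + gamma%:P)^+d - L%:P * (beta%:P * 'X + 1)^+d).[t] =
  (t + gamma) ^+ d * (t - L * hh beta gamma t ^+ d).
Proof.
move=> hg ht.
have hne : (t + gamma) ^+ d != 0 by rewrite expf_neq0 // gt_eqF //; lra.
rewrite !hornerE /hh expr_div_n mulrBr; congr (_ - _); first by rewrite mulrC.
by field.
Qed.

Lemma ivt_fix (R : rcfType) d (beta gamma L a b : R) :
  0 <= beta -> 0 < gamma -> a <= b -> 0 < a ->
  a - L * hh beta gamma a ^+ d <= 0 -> 0 <= b - L * hh beta gamma b ^+ d ->
  exists y, a <= y <= b /\ L * hh beta gamma y ^+ d = y.
Proof.
move=> hb hg hab ha ga gb.
set P := ('X * ('X + gamma%:P)^+d - L%:P * (beta%:P * 'X + 1)^+d).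
have hb0 : 0 < b by lra.
have : P.[a] <= 0 <= P.[b].
  rewrite /P !Pev // ; apply/andP; split.
    by rewrite mulr_ge0_le0 // ltW // exprn_gt0 //; lra.
  by rewrite mulr_ge0 // ltW // exprn_gt0 //; lra.
move=> /(poly_ivt hab) [y /andP [h1 h2] ry]; exists y; split; first by rewrite h1 h2.
move: ry; rewrite /root /P Pev //; last by lra.
rewrite mulf_eq0 expf_eq0 => /orP [/andP [_ /eqP]|/eqP]; first by lra.
by move=> e; apply/eqP; rewrite eq_sym -subr_eq0 e.
Qed.

Lemma Fd_hh (R : rcfType) d (beta gamma lam x : R) :
  Fd d beta gamma lam x = lam * hh beta gamma x ^+ d.
Proof. by []. Qed.

Lemma gap_up (R : rcfType) (c x y r Dx Dy e : R) : 0 <= c -> 0 < Dx -> 0 < Dy -> 0 < r ->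
  c * x <= e * Dx -> y * Dx <= r * x * Dy -> c * y <= r * e * Dy.
Proof.
move=> hc hx hy hr g1 g2.
have h1 : c * (y * Dx) <= c * (r * x * Dy) by rewrite ler_wpM2l.
have h2 : (r * Dy) * (c * x) <= (r * Dy) * (e * Dx) by rewrite ler_wpM2l // ltW // mulr_gt0.
rewrite -(ler_pM2r hx); nra.
Qed.
Lemma gap_dn (R : rcfType) (c x y r Dx Dy e : R) : 0 <= c -> 0 < Dx -> 0 < Dy -> 0 < r ->
  c * x <= e * Dx -> r * y * Dx <= x * Dy -> r * (c * y) <= e * Dy.
Proof.
move=> hc hx hy hr g1 g2.
have h1 : c * (r * y * Dx) <= c * (x * Dy) by rewrite ler_wpM2l.
have h2 : Dy * (c * x) <= Dy * (e * Dx) by rewrite ler_wpM2l // ltW.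
rewrite -(ler_pM2r hx); nra.
Qed.

Lemma part1_gen (R : rcfType) d (beta gamma lam delta r : R) :
  0 <= beta -> 0 < gamma -> beta * gamma < 1 -> 0 < lam -> 0 < r ->
  (1 <= r -> r * (1 - delta) <= 1 - delta / 2) ->
  (r <= 1 -> 1 - delta <= r * (1 - delta / 2)) ->
  d_unique d beta gamma lam delta -> d_unique d beta gamma (r * lam) (delta / 2).
Proof.
move=> hb hg hbg hl hr c1 c2 [x [hx [fx [_ gap]]]].
rewrite Fd_hh in fx.
have hrl : 0 < r * lam by apply: mulr_gt0.
set c := d%:R * (1 - beta * gamma).
have hc : 0 <= c by apply: mulr_ge0; [exact: ler0n | lra].
have Dpos : forall t : R, 0 < t -> 0 < (beta * t + 1) * (t + gamma).
  move=> t ht; apply: mulr_gt0; last by lra.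
  have := mulr_ge0 hb (ltW ht); lra.
have hDx := Dpos x hx.
move: gap; rewrite ler_pdivrMr // -/c => gap.
have hrx : 0 < r * x by apply: mulr_gt0.
have [y [hy1 [fy hyb]]] : exists y, 0 < y /\ (r * lam) * hh beta gamma y ^+ d = y /\
   ((1 <= r -> x <= y <= r * x) /\ (r <= 1 -> r * x <= y <= x)).
  case: (lerP 1 r) => hr1.
    have hxr : x <= r * x by nra.
    have [y [/andP [ya yb] fy]] : exists y, x <= y <= r * x /\ (r * lam) * hh beta gamma y ^+ d = y.
      apply: ivt_fix => //.
        by rewrite -mulrA fx; nra.
      have := @hhX_anti R d _ _ _ _ hb hg hbg hx hxr.
      move=> H; have : lam * hh beta gamma (r * x) ^+ d <= lam * hh beta gamma x ^+ d by rewrite ler_pM2l.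
      rewrite fx => H2; nra.
    exists y; split; first by lra.
    split=> //; split=> hr2; first by rewrite ya yb.
    have e : r = 1 by lra.
    by move: yb; rewrite e mul1r => yb; rewrite ya yb.
  have hxr : r * x <= x by nra.
  have [y [/andP [ya yb] fy]] : exists y, r * x <= y <= x /\ (r * lam) * hh beta gamma y ^+ d = y.
    apply: ivt_fix => //.
      have := @hhX_anti R d _ _ _ _ hb hg hbg hrx hxr.
      move=> H; have : lam * hh beta gamma x ^+ d <= lam * hh beta gamma (r * x) ^+ d by rewrite ler_pM2l.
      rewrite fx => H2; nra.
    by rewrite -mulrA fx; nra.
  exists y; split; first by lra.
  split=> //; split=> hr2; last by rewrite ya yb.
  lra.
have hDy := Dpos y hy1.
exists y; split=> //; split; first by rewrite Fd_hh.
split.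
  move=> z hz; rewrite Fd_hh => fz.
  exact: (@fix_uniq R d beta gamma (r * lam)).
rewrite ler_pdivrMr // -/c.
case: (lerP 1 r) => hr1.
  have /andP [ya yb] := (hyb.1 hr1).
  have hD : (beta * x + 1) * (x + gamma) <= (beta * y + 1) * (y + gamma).
    have : 0 <= beta * (y - x) * (y + x) by apply: mulr_ge0; [apply: mulr_ge0 => //; lra | lra].
    have : 0 <= beta * gamma by apply: mulr_ge0 => //; lra.
    nra.
  have e1 : y * ((beta * x + 1) * (x + gamma)) <= r * x * ((beta * y + 1) * (y + gamma)).
    nra.
  have e3 := @gap_up R _ _ _ _ _ _ _ hc hDx hDy hr gap e1.
  have := c1 hr1; nra.
have /andP [ya yb] := (hyb.2 (ltW hr1)).
have e1 : r * y * ((beta * x + 1) * (x + gamma)) <= x * ((beta * y + 1) * (y + gamma)).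
  have u1 : y * (x + gamma) <= x * (y + gamma) by nra.
  have Dpos_aux : 0 < beta * x + 1 by have := mulr_ge0 hb (ltW hx); lra.
  have u2 : r * (beta * x + 1) <= beta * y + 1 by nra.
  have P := ler_pM (ltW (mulr_gt0 hy1 (addr_gt0 hx hg))) (ltW (mulr_gt0 hr (Dpos_aux))) u1 u2.
  nra.
have e3 := @gap_dn R _ _ _ _ _ _ _ hc hDx hDy hr gap e1.
have := c2 (ltW hr1); nra.
Qed.

Lemma sq_facts (R : rcfType) (beta gamma : R) : 0 < beta -> 0 < gamma ->
  let s := Num.sqrt (gamma / beta) in let q := Num.sqrt (beta * gamma) in
  [/\ 0 < s, beta * s = q, gamma = q * s, q ^+ 2 = beta * gamma & s * hh beta gamma s = 1].
Proof.
move=> hb hg s q.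
have hs : 0 < s by rewrite sqrtr_gt0 divr_gt0.
have s2 : s ^+ 2 = gamma / beta by rewrite sqr_sqrtr // ltW // divr_gt0.
have q2 : q ^+ 2 = beta * gamma by rewrite sqr_sqrtr // ltW // mulr_gt0.
have ebs : beta * s = q.
  rewrite /q; have -> : beta * gamma = (beta * s) ^+ 2.
    rewrite exprMn s2; field; lra.
  by rewrite sqrtr_sqr ger0_norm // mulr_ge0 // ltW.
have eg : gamma = q * s.
  rewrite -ebs -mulrA -expr2 s2; field; lra.
split=> //.
rewrite /hh ebs.
have hq : 0 <= q by rewrite -ebs mulr_ge0 // ltW.
rewrite eg; have -> : s + q * s = s * (q + 1) by ring.
field; apply/andP; split; rewrite gt_eqF //; lra.
Qed.
Lemma key (R : rcfType) (beta s q x delta c : R) :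
  0 < beta -> 0 < s -> q = beta * s -> q < 1 -> 0 < delta -> delta < 1 -> 0 < x ->
  c * x <= (1 - delta) * ((beta * x + 1) * (x + q * s)) ->
  (1 - delta / 2) * (1 + q) ^+ 2 < c ->
  s <= (1 + delta / 2) * x -> x <= (1 + delta / 2) * s -> False.
Proof.
move=> hb hs hq hq1 hd0 hd1 hx g hc h1 h2.
have hq0 : 0 <= q by rewrite hq; apply: mulr_ge0; lra.
have eD : (beta * x + 1) * (x + q * s) = (1 + q) ^+ 2 * x + beta * (x - s) ^+ 2.
  by rewrite hq; ring.
have B : (x - s) ^+ 2 <= (delta * s / 2) * (delta * x / 2).
  case: (lerP s x) => hsx.
    have u1 : x - s <= delta * s / 2 by lra.
    have u2 : x - s <= delta * x / 2 by nra.
    rewrite expr2; apply: ler_pM; lra.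
  have u1 : s - x <= delta * x / 2 by lra.
  have u2 : s - x <= delta * s / 2 by nra.
  have -> : (x - s) ^+ 2 = (s - x) * (s - x) by ring.
  rewrite mulrC; apply: ler_pM; lra.
have B2 : beta * (x - s) ^+ 2 <= q * (delta ^+ 2 * x / 4).
  have := ler_wpM2l (ltW hb) B.
  have -> : beta * (delta * s / 2 * (delta * x / 2)) = q * (delta ^+ 2 * x / 4).
    by rewrite hq; field.
  done.
have B3 : q * (delta ^+ 2 * x / 4) <= (delta / 2) * (1 + q) ^+ 2 * x.
  have : q * delta <= 2 * (1 + q) ^+ 2 by nra.
  move=> H; have := ler_wpM2r (ltW (mulr_gt0 hd0 hx)) H; nra.
have hsq : 0 <= beta * (x - s) ^+ 2 by apply: mulr_ge0; [lra | exact: sqr_ge0].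
have hcx : (1 - delta / 2) * (1 + q) ^+ 2 * x < c * x by rewrite ltr_pM2r.
rewrite eD in g.
nra.
Qed.

Theorem lemma7p10 (R : rcfType) (V : finType) (E : rel V) (Delta : nat)
  (beta gamma lambda delta : R) :
  simple_graph E -> max_degree E = Delta ->
  antiferro beta gamma lambda -> 0 < delta < 1 ->
  (forall d : nat, (1 <= d)%N -> (d < Delta)%N ->
     d_unique d beta gamma lambda delta ->
     d_unique d beta gamma (shifted beta gamma Delta lambda delta) (delta / 2))
  /\
  (d_unique (Delta - 1) beta gamma lambda delta ->
   (1 - delta / 2) * Delta_bar beta gamma < (Delta - 1)%:R ->
   (le_thr beta gamma Delta lambda ->
      lt_thr beta gamma Delta (shifted beta gamma Delta lambda delta)) /\
   (~ le_thr beta gamma Delta lambda ->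
      gt_thr beta gamma Delta (shifted beta gamma Delta lambda delta))).
Proof.
move=> _ _ [hb [_ [hg [hl hbg]]]] /andP [hd0 hd1].
set k := 1 + delta / 2.
have hk : 0 < k by rewrite /k; lra.
have hki : 0 < k^-1 by rewrite invr_gt0.
have ek : k * k^-1 = 1 by rewrite divff // gt_eqF.
split.
  move=> d _ _ U; rewrite /shifted; case: ifP => _.
    apply: part1_gen => //; try (move=> *; rewrite /k; nra).
  apply: part1_gen => //.
    move=> h1; have hk1 : 1 < k by rewrite /k; lra.
    have h3 : 0 <= k^-1 - 1 by rewrite subr_ge0.
    have := mulr_ge0 (ltW hk) h3; nra.
  move=> h1.
  have : 0 <= (1 - delta / 2) - k * (1 - delta) by rewrite /k; nra.
  move=> h2; have := mulr_ge0 (ltW hki) h2; nra.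
move=> U hD.
case: (eqVneq beta 0) => [b0|bn0].
  split; first by move=> _; left.
  by move=> nle; exfalso; apply: nle; left.
have hbp : 0 < beta by rewrite lt_def bn0.
have [hs ebs eg q2 shs] := @sq_facts R _ _ hbp hg.
set s := Num.sqrt (gamma / beta) in hs ebs eg shs *.
set q := Num.sqrt (beta * gamma) in ebs eg q2 *.
have hq0 : 0 <= q by rewrite -ebs mulr_ge0 // ltW.
have hq1 : q < 1 by nra.
case: Delta U hD => [|d] U hD.
  exfalso; move: hD; rewrite /Delta_bar -/q.
  have : 0 < (1 + q) / (1 - q) by rewrite divr_gt0 //; lra.
  move=> h; rewrite sub0n; nra.
rewrite subn1 /= in U hD.
move: hD; rewrite /Delta_bar -/q mulrA ltr_pdivrMr; last by lra.
move=> hD.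
have hc : (1 - delta / 2) * (1 + q) ^+ 2 < d%:R * (1 - beta * gamma).
  have := ltr_pM2r (x := 1 + q) ltac:(lra).
  move=> H; have := hD; rewrite -H -q2; nra.
case: U => x [hx [fx [_ gap]]].
rewrite Fd_hh in fx.
have hDx : 0 < (beta * x + 1) * (x + gamma).
  by apply: mulr_gt0; [have := mulr_ge0 hb (ltW hx); lra | lra].
move: gap; rewrite ler_pdivrMr // => gap.
have gap' : d%:R * (1 - beta * gamma) * x <= (1 - delta) * ((beta * x + 1) * (x + q * s)).
  by rewrite -eg.
have K := @key R beta s q x delta _ hbp hs (esym ebs) hq1 hd0 hd1 hx gap' hc.
have eT : Num.sqrt (gamma / beta) ^+ d.+1 * hh beta gamma s ^+ d = s.
  by rewrite -/s exprS -mulrA -exprMn shs expr1n mulr1.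
have hhs : 0 < hh beta gamma s ^+ d by rewrite exprn_gt0 // hh_pos.
have hhx : 0 < hh beta gamma x ^+ d by rewrite exprn_gt0 // hh_pos.
set T := Num.sqrt (gamma / beta) ^+ d.+1 in eT *.
split.
  move=> [b0|le]; first by move/eqP: bn0.
  rewrite /shifted; rewrite ifT; last by rewrite -/T le orbT.
  right; rewrite -/T.
  have xs : x <= s.
    rewrite leNgt; apply/negP => sx.
    have H := @hhX_anti R d _ _ _ _ hb hg hbg hs (ltW sx).
    have H1 : lambda * hh beta gamma x ^+ d <= T * hh beta gamma s ^+ d.
      apply: (le_trans (ler_wpM2l (ltW hl) H)).
      by rewrite ler_wpM2r // ltW.
    rewrite fx eT in H1; lra.
  have kxs : k * x < s.
    rewrite ltNge; apply/negP => sk.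
    apply: K => //; rewrite -/k; nra.
  rewrite ltNge; apply/negP => Tk.
  have H := @hhX_anti R d _ _ _ _ hb hg hbg hx xs.
  have H1 : T * hh beta gamma s ^+ d <= k * lambda * hh beta gamma x ^+ d.
    apply: (le_trans (ler_wpM2l _ H)); first by apply: ltW; rewrite /T exprn_gt0.
    by rewrite ler_wpM2r // ltW.
  rewrite eT -mulrA fx in H1; lra.
move=> nle.
have lT : T < lambda by rewrite ltNge; apply/negP => h; apply: nle; right.
rewrite /shifted ifF; last by rewrite -/T (negbTE bn0) /= leNgt lT.
split; first by move/eqP: bn0.
rewrite -/T.
have sx : s < x.
  rewrite ltNge; apply/negP => xs.
  have H := @hhX_anti R d _ _ _ _ hb hg hbg hx xs.
  have H1 : T * hh beta gamma s ^+ d <= T * hh beta gamma x ^+ d.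
    by rewrite ler_wpM2l // ltW // /T exprn_gt0.
  have H2 : T * hh beta gamma x ^+ d < lambda * hh beta gamma x ^+ d by rewrite ltr_pM2r.
  rewrite eT fx in H1 H2; lra.
have ksx : k * s < x.
  rewrite ltNge; apply/negP => xk.
  apply: K => //; rewrite -/k; nra.
have H := @hhX_anti R d _ _ _ _ hb hg hbg hs (ltW sx).
have H1 : T * hh beta gamma x ^+ d <= T * hh beta gamma s ^+ d.
  by rewrite ler_wpM2l // ltW // /T exprn_gt0.
have H2 : s < k^-1 * x.
  have := ltr_pM2l hki; move=> e; rewrite -(e (k * s) x) in ksx.
  by move: ksx; rewrite mulrA mulVf ?gt_eqF // mul1r.
rewrite eT in H1.
rewrite -fx mulrA in H2.
rewrite -(ltr_pM2r hhx); lra.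
Qed.
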